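(* Let $\boldsymbol X \in \mathbb{R}^{n\times d}$, $\boldsymbol y \in \mathbb{R}^n$, $\boldsymbol M = \boldsymbol X^\top \boldsymbol X$, $\boldsymbol r = \boldsymbol X^\top \boldsymbol y$. Assume (A1) $\boldsymbol r > \mathbf 0$ and (A2) $M_{ij}\le 0$ for all $i\neq j$. Let $\boldsymbol C>\mathbf 0$, $\boldsymbol k>\mathbf 0$ in $\mathbb{R}^d$, and for $\varepsilon>0$ let $\boldsymbol\theta^{(\varepsilon)}(t)$ solve $$\frac{\mathrm d \theta_i}{\mathrm d t} = \theta_i\Big(r_i - \sum_{j=1}^d M_{ij}\theta_j\Big),\quad i=1,\dots,d,$$ with $\boldsymbol\theta^{(\varepsilon)}(0) = (C_1\varepsilon^{k_1},\dots,C_d\varepsilon^{k_d})$. Using the rescaled time $s$ with $t = s\log\frac1\varepsilon$, define $w_i^{(\varepsilon)}(s) = \frac{\log\theta_i^{(\varepsilon)}(s\log\frac1\varepsilon)}{\log\varepsilon}$ and $\boldsymbol z^{(\varepsilon)}(s) = \int_0^s \boldsymbol\theta^{(\varepsilon)}(u\log\tfrac1\varepsilon)\,\mathrm du$. For $s\ge0$, let $(\boldsymbol w(s),\boldsymbol z(s))\in(\mathbb{R}^d)^2$ be the unique solution of the linear complementarity problem $$\boldsymbol w = \boldsymbol k - s\boldsymbol r + \boldsymbol M\boldsymbol z,\qquad \boldsymbol w\ge\mathbf 0,\quad \boldsymbol z\ge \mathbf 0,\quad \boldsymbol w^\top\boldsymbol z = 0.$$ Then $\boldsymbol w^{(\varepsilon)}(s)\to\boldsymbol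 w(s)$ and $\boldsymbol z^{(\varepsilon)}(s)\to\boldsymbol z(s)$ as $\varepsilon\to0$, uniformly for $s$ in compact subsets of $\mathbb{R}_{\ge0}$.
   Context: Vector inequalities are coordinatewise. Under (A1)–(A2), $\boldsymbol M$ is symmetric positive definite, so the linear complementarity problem above has a unique solution for each $s$. *)

(* Defs.v *)
(* Stdlib reals + Coquelicot. Vectors in R^d are functions
   nat -> R, only their values at indices 0..d-1 matter. *)
From Stdlib Require Import Reals.
From Coquelicot Require Import Coquelicot.
Open Scope R_scope.

Fixpoint sumr (d : nat) (f : nat -> R) : R :=
  match d with
  | O => 0
  | S m => sumr m f + f m
  end.

(* M = X^T X, for X an n x d matrix given by its entries X a i (a < n, i < d) *)
Definition gramM (n : nat) (X : nat -> nat -> R) (i j : nat) : R :=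
  sumr n (fun a => X a i * X a j).

Definition corr_r (n : nat) (X : nat -> nat -> R) (y : nat -> R) (i : nat) : R :=
  sumr n (fun a => X a i * y a).

Definition solves_ODE (d : nat) (M : nat -> nat -> R) (r : nat -> R)
  (theta0 : nat -> R) (theta : R -> nat -> R) : Prop :=
  (forall i, (i < d)%nat -> theta 0 i = theta0 i) /\
  (forall i, (i < d)%nat ->
     filterlim (fun t => theta t i) (at_right 0) (locally (theta 0 i))) /\
  (forall t, 0 < t -> forall i, (i < d)%nat ->
     is_derive (fun u => theta u i) t
       (theta t i * (r i - sumr d (fun j => M i j * theta t j)))).

Definition solves_LCP (d : nat) (M : nat -> nat -> R) (r k : nat -> R) (s : R)
  (w z : nat -> R) : Prop :=
  (forall i, (i < d)%nat ->
     w i = k i - s * r i + sumr d (fun j => M i j * z j) /\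
     0 <= w i /\ 0 <= z i) /\
  sumr d (fun i => w i * z i) = 0.

Definition w_eps (theta : R -> nat -> R) (eps s : R) (i : nat) : R :=
  ln (theta (s * ln (/ eps)) i) / ln eps.

Definition z_eps (theta : R -> nat -> R) (eps s : R) (i : nat) : R :=
  RInt (fun u => theta (u * ln (/ eps)) i) 0 s.

(* Main.v *)
Require Import Defs.
From Stdlib Require Import Reals Lra Lia Psatz.
From Coquelicot Require Import Coquelicot.
Open Scope R_scope.


Lemma sumr_ext d f g : (forall i, (i < d)%nat -> f i = g i) -> sumr d f = sumr d g.
Proof. induction d; simpl; intros H; auto. rewrite IHd by (intros; apply H; lia). rewrite H by lia. auto. Qed.

Lemma sumr_plus d f g : sumr d (fun i => f i + g i) = sumr d f + sumr d g.
Proof. induction d; simpl; [lra|]. rewrite IHd; lra. Qed.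

Lemma sumr_minus d f g : sumr d (fun i => f i - g i) = sumr d f - sumr d g.
Proof. induction d; simpl; [lra|]. rewrite IHd; lra. Qed.

Lemma sumr_scal d c f : sumr d (fun i => c * f i) = c * sumr d f.
Proof. induction d; simpl; [lra|]. rewrite IHd; lra. Qed.

Lemma sumr_scalr d c f : sumr d (fun i => f i * c) = sumr d f * c.
Proof. induction d; simpl; [lra|]. rewrite IHd; lra. Qed.

Lemma sumr_zero d : sumr d (fun _ => 0) = 0.
Proof. induction d; simpl; [lra|]. rewrite IHd; lra. Qed.

Lemma sumr_le d f g : (forall i, (i < d)%nat -> f i <= g i) -> sumr d f <= sumr d g.
Proof. induction d; simpl; intros H; [lra|]. assert (H1 := H d ltac:(lia)). assert (sumr d f <= sumr d g) by (apply IHd; intros; apply H; lia). lra. Qed.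

Lemma sumr_ge0 d f : (forall i, (i < d)%nat -> 0 <= f i) -> 0 <= sumr d f.
Proof. intros H. rewrite <- (sumr_zero d). apply sumr_le. auto. Qed.

Lemma sumr_swap d e F : sumr d (fun i => sumr e (fun j => F i j)) = sumr e (fun j => sumr d (fun i => F i j)).
Proof. induction d; simpl. { rewrite sumr_zero; auto. } rewrite IHd. rewrite <- sumr_plus. auto. Qed.

Lemma sumr_abs d f : Rabs (sumr d f) <= sumr d (fun i => Rabs (f i)).
Proof. induction d; simpl. { rewrite Rabs_R0; lra. } eapply Rle_trans. apply Rabs_triang. lra. Qed.

Lemma sumr_term d f i : (forall j, (j < d)%nat -> 0 <= f j) -> (i < d)%nat -> f i <= sumr d f.
Proof. induction d; simpl; intros H Hi; [lia|].
  assert (0 <= sumr d f) by (apply sumr_ge0; intros; apply H; lia).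
  destruct (Nat.eq_dec i d). subst. lra.
  assert (f i <= sumr d f) by (apply IHd; [intros; apply H; lia| lia]).
  assert (0 <= f d) by (apply H; lia). lra. Qed.

Lemma sumr_min d f : (forall i, (i < d)%nat -> 0 < f i) -> exists m, 0 < m /\ forall i, (i < d)%nat -> m <= f i.
Proof. induction d; intros H. exists 1; split; [lra| intros; lia].
  destruct IHd as [m [Hm Hm2]]. intros; apply H; lia.
  exists (Rmin m (f d)). split. apply Rmin_glb_lt; [exact Hm| apply H; lia].
  intros i Hi. destruct (Nat.eq_dec i d). subst. apply Rmin_r.
  eapply Rle_trans. apply Rmin_l. apply Hm2; lia. Qed.

Lemma sumr_max d f : exists m, 0 <= m /\ forall i, (i < d)%nat -> Rabs (f i) <= m.
Proof. exists (sumr d (fun i => Rabs (f i))). split. apply sumr_ge0; intros; apply Rabs_pos.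
  intros i Hi. apply (sumr_term d (fun i => Rabs (f i))); auto. intros; apply Rabs_pos. Qed.

Lemma sumr_bound d f m : (forall i, (i < d)%nat -> Rabs (f i) <= m) -> Rabs (sumr d f) <= INR d * m.
Proof. induction d; intros H; simpl sumr. rewrite Rabs_R0; simpl; lra.
  eapply Rle_trans. apply Rabs_triang. rewrite (S_INR d).
  assert (Rabs (sumr d f) <= INR d * m) by (apply IHd; intros; apply H; lia).
  assert (Rabs (f d) <= m) by (apply H; lia). lra. Qed.

Lemma is_derive_sumr d (F : R -> nat -> R) (F' : nat -> R) x :
  (forall i, (i < d)%nat -> is_derive (fun s => F s i) x (F' i)) ->
  is_derive (fun s => sumr d (F s)) x (sumr d F').
Proof. induction d; simpl; intros H.
  - apply (is_derive_const 0 x).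
  - apply (is_derive_plus (fun s => sumr d (F s)) (fun s => F s d)). apply IHd; intros; apply H; lia. apply H; lia.
Qed.

Definition Qf d (M : nat -> nat -> R) (v : nat -> R) := sumr d (fun i => v i * sumr d (fun j => M i j * v j)).

Lemma gram_sym n X i j : gramM n X i j = gramM n X j i.
Proof. unfold gramM. apply sumr_ext; intros; ring. Qed.

Lemma gram_diag n X i : 0 <= gramM n X i i.
Proof. unfold gramM. apply sumr_ge0; intros; nra. Qed.

Lemma gram_quad n d X v : Qf d (gramM n X) v = sumr n (fun a => (sumr d (fun i => X a i * v i))^2).
Proof. unfold Qf, gramM.
  transitivity (sumr d (fun i => sumr n (fun a => v i * X a i * sumr d (fun j => X a j * v j)))).
  - apply sumr_ext; intros i Hi. rewrite <- sumr_scal.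
    transitivity (sumr d (fun j => sumr n (fun a => v i * X a i * (X a j * v j)))).
    + apply sumr_ext; intros j Hj. rewrite <- sumr_scalr, <- sumr_scal. apply sumr_ext; intros; ring.
    + rewrite sumr_swap. apply sumr_ext; intros. rewrite <- sumr_scal. apply sumr_ext; intros; ring.
  - rewrite sumr_swap. apply sumr_ext; intros a Ha. rewrite sumr_scalr. simpl. rewrite Rmult_1_r.
    f_equal. apply sumr_ext; intros; ring.
Qed.

Lemma corr_lin n d X y v : sumr d (fun i => corr_r n X y i * v i) = sumr n (fun a => y a * sumr d (fun i => X a i * v i)).
Proof. unfold corr_r.
  transitivity (sumr d (fun i => sumr n (fun a => y a * (X a i * v i)))).
  - apply sumr_ext; intros. rewrite <- sumr_scalr. apply sumr_ext; intros; ring.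
  - rewrite sumr_swap. apply sumr_ext; intros. rewrite sumr_scal. auto.
Qed.

Lemma CS n y u : 0 < sumr n (fun a => y a ^ 2) ->
  (sumr n (fun a => y a * u a))^2 <= sumr n (fun a => y a ^ 2) * sumr n (fun a => u a ^ 2).
Proof. intros HY. set (Y := sumr n (fun a => y a ^ 2)) in *. set (P := sumr n (fun a => y a * u a)).
  set (t := P / Y).
  assert (H : 0 <= sumr n (fun a => (u a - t * y a)^2)) by (apply sumr_ge0; intros; apply pow2_ge_0).
  assert (E : sumr n (fun a => (u a - t * y a)^2) = sumr n (fun a => u a ^ 2) - 2 * t * P + t * t * Y).
  { transitivity (sumr n (fun a => u a ^ 2 + (-2 * t) * (y a * u a) + (t*t) * (y a ^ 2))).
    apply sumr_ext; intros; ring. rewrite !sumr_plus, !sumr_scal. unfold P, Y. ring. }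
  rewrite E in H. unfold t in H.
  assert (H2 : 0 <= Y * (sumr n (fun a => u a ^ 2) - 2 * (P / Y) * P + P / Y * (P / Y) * Y)) by nra.
  replace (Y * (sumr n (fun a => u a ^ 2) - 2 * (P / Y) * P + P / Y * (P / Y) * Y)) with
    (Y * sumr n (fun a => u a ^ 2) - P^2) in H2 by (field; lra). lra.
Qed.

Lemma quad_abs d M v : (forall i j, (i < d)%nat -> (j < d)%nat -> i <> j -> M i j <= 0) ->
  Qf d M (fun i => Rabs (v i)) <= Qf d M v.
Proof. intros H. unfold Qf. apply sumr_le; intros i Hi. rewrite <- !sumr_scal. apply sumr_le; intros j Hj.
  destruct (Nat.eq_dec i j). subst.
  - replace (Rabs (v j) * (M j j * Rabs (v j))) with (M j j * (Rabs (v j) * Rabs (v j))) by ring.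
    rewrite <- Rabs_mult. rewrite Rabs_right by nra. nra.
  - assert (M i j <= 0) by auto. 
    assert (v i * v j <= Rabs (v i) * Rabs (v j)). { rewrite <- Rabs_mult. apply Rle_abs. }
    nra.
Qed.

Lemma quad_lower n d X y :
  (0 < d)%nat ->
  (forall i, (i < d)%nat -> 0 < corr_r n X y i) ->
  (forall i j, (i < d)%nat -> (j < d)%nat -> i <> j -> gramM n X i j <= 0) ->
  exists c, 0 < c /\ forall v, c * (sumr d (fun i => Rabs (v i)))^2 <= Qf d (gramM n X) v.
Proof. intros Hd HA1 HA2.
  destruct (sumr_min d _ HA1) as [m [Hm Hm2]].
  assert (HY : 0 < sumr n (fun a => y a ^ 2)).
  { destruct (Rle_lt_dec (sumr n (fun a => y a ^ 2)) 0) as [h|h]; auto.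
    exfalso. assert (Hy0 : forall a, (a < n)%nat -> y a = 0).
    { intros a Ha. assert (y a ^ 2 <= sumr n (fun a => y a ^ 2)) by (apply (sumr_term n (fun a => y a ^ 2)); auto; intros; nra). nra. }
    assert (corr_r n X y 0 = 0). { unfold corr_r. rewrite <- (sumr_zero n). apply sumr_ext; intros. rewrite Hy0; auto; ring. }
    assert (0 < corr_r n X y 0) by (apply HA1; auto). lra. }
  exists (m^2 / sumr n (fun a => y a ^ 2)). split. apply Rdiv_lt_0_compat; nra.
  intros v. set (av := fun i => Rabs (v i)). set (Y := sumr n (fun a => y a ^ 2)) in *.
  eapply Rle_trans; [|apply (quad_abs d (gramM n X) v HA2)]. fold av.
  rewrite gram_quad.
  assert (H1 : m * sumr d av <= sumr d (fun i => corr_r n X y i * av i)).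
  { rewrite <- sumr_scal. apply sumr_le; intros i Hi. assert (m <= corr_r n X y i) by auto.
    assert (0 <= av i) by apply Rabs_pos. nra. }
  rewrite corr_lin in H1.
  assert (H2 := CS n y (fun a => sumr d (fun i => X a i * av i)) HY). fold Y in H2.
  assert (0 <= sumr d av) by (apply sumr_ge0; intros; apply Rabs_pos).
  assert (H3 : (m * sumr d av)^2 <= Y * sumr n (fun a => (sumr d (fun i => X a i * av i)) ^ 2)).
  { eapply Rle_trans; [|exact H2]. apply pow_incr. split; [apply Rmult_le_pos; lra| exact H1]. }
  unfold Rdiv. apply (Rmult_le_reg_l Y); auto.
  replace (Y * (m ^ 2 * / Y * sumr d av ^ 2)) with ((m * sumr d av)^2) by (field; lra). exact H3.
Qed.

Lemma right_lim_eps (g : R -> R) x0 l : filterlim g (at_right x0) (locally l) ->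
  forall e, 0 < e -> exists eta, 0 < eta /\ forall t, x0 < t < x0 + eta -> Rabs (g t - l) < e.
Proof. intros H e He.
  destruct (proj1 (filterlim_locally g l) H (mkposreal e He)) as [dl Hd].
  exists dl. split. apply cond_pos. intros t Ht. apply Hd.
  - unfold ball; simpl; unfold AbsRing_ball, abs, minus, plus, opp; simpl. rewrite Rabs_right; lra.
  - lra.
Qed.

Lemma derive_cont (g : R -> R) x l : is_derive g x l -> continuity_pt g x.
Proof. intros H. apply continuity_pt_filterlim. apply (@ex_derive_continuous R_AbsRing R_NormedModule g x). exists l; auto. Qed.

Lemma cont_eps (g : R -> R) x : continuity_pt g x -> forall e, 0 < e -> exists eta, 0 < eta /\ forall t, Rabs (t - x) < eta -> Rabs (g t - g x) < e.
Proof. intros H e He. destruct (H e He) as [a [Ha Hb]]. exists a. split; auto. intros t Ht.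
  destruct (Req_dec t x). subst. rewrite Rminus_eq_0, Rabs_R0; auto.
  apply (Hb t). split. split; [exact I| auto]. simpl. unfold R_dist; auto. Qed.

Lemma mono0 (g : R -> R) : filterlim g (at_right 0) (locally (g 0)) ->
  (forall s, 0 < s -> exists l, is_derive g s l /\ l <= 0) -> forall s, 0 <= s -> g s <= g 0.
Proof. intros Hr Hd s Hs. destruct (Req_dec s 0) as [E|E]. subst; lra.
  destruct (Rle_lt_dec (g s) (g 0)) as [h|h]; auto. exfalso.
  destruct (right_lim_eps g 0 (g 0) Hr ((g s - g 0)/2)) as [eta [He Hb]]. lra.
  set (t0 := Rmin (eta/2) (s/2)).
  assert (Ht0 : 0 < t0 /\ t0 < s /\ t0 < eta). { unfold t0. split. apply Rmin_glb_lt; lra. split.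
    eapply Rle_lt_trans. apply Rmin_r. lra. eapply Rle_lt_trans. apply Rmin_l. lra. }
  assert (Hgt := Hb t0 ltac:(lra)).
  assert (HD : forall x, 0 < x -> is_derive g x (Derive g x) /\ Derive g x <= 0).
  { intros x Hx. destruct (Hd x Hx) as [l [Hl1 Hl2]]. rewrite (is_derive_unique _ _ _ Hl1). auto. }
  destruct (MVT_gen g t0 s (Derive g)) as [c [Hc1 Hc2]].
  - intros x Hx. rewrite Rmin_left in Hx by lra. apply HD. lra.
  - intros x Hx. rewrite Rmin_left, Rmax_right in Hx by lra. apply (derive_cont g x (Derive g x)). apply HD; lra.
  - rewrite Rmin_left, Rmax_right in Hc1 by lra. assert (Hc := proj2 (HD c ltac:(lra))).
    assert (Derive g c * (s - t0) <= 0) by (apply Rmult_le_0_r; lra).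
    apply Rabs_def2 in Hgt. lra.
Qed.

Lemma const0 (g : R -> R) : filterlim g (at_right 0) (locally (g 0)) ->
  (forall s, 0 < s -> is_derive g s 0) -> forall s, 0 <= s -> g s = g 0.
Proof. intros Hr Hd s Hs. apply Rle_antisym.
  - apply mono0; auto. intros s' Hs'. exists 0; split; auto; lra.
  - assert (H := mono0 (fun t => - g t)). simpl in H.
    assert (- g s <= - g 0); [|lra]. apply H; auto.
    + apply (filterlim_comp _ _ _ g Ropp (at_right 0) (locally (g 0)) (locally (- g 0))); auto.
      apply (@filterlim_opp R_AbsRing R_NormedModule (g 0)).
    + intros sp Hsp. exists (opp 0). split. exact (is_derive_opp g sp 0 (Hd sp Hsp)). unfold opp; simpl; lra.
Qed.

Lemma stay_below (g : R -> R) a b dl : a <= b ->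
  (forall x, a <= x <= b -> exists l, is_derive g x l /\ (dl < g x -> l < 0)) ->
  g a <= dl -> g b <= dl.
Proof. intros Hab Hd Ha.
  assert (HD : forall x, a <= x <= b -> is_derive g x (Derive g x) /\ (dl < g x -> Derive g x < 0)).
  { intros x Hx. destruct (Hd x Hx) as [l [Hl1 Hl2]]. rewrite (is_derive_unique _ _ _ Hl1). auto. }
  assert (Hc : forall x, a <= x <= b -> continuity_pt g x).
  { intros x Hx. apply (derive_cont g x (Derive g x)). apply HD; auto. }
  destruct (continuity_ab_maj g a b Hab Hc) as [m [Hm1 Hm2]].
  destruct (Rle_lt_dec (g m) dl) as [h|h]. { assert (g b <= g m) by (apply Hm1; lra). lra. }
  exfalso. assert (Ham : a < m). { destruct (Req_dec a m). subst; lra. lra. }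
  destruct (cont_eps g m (Hc m Hm2) (g m - dl)) as [eta [He Hb]]. lra.
  set (x0 := Rmax a (m - eta/2)).
  assert (Hx0 : a <= x0 /\ x0 < m /\ m - x0 < eta). { unfold x0. split. apply Rmax_l. split.
    apply Rmax_lub_lt; lra. assert (m - eta/2 <= Rmax a (m - eta/2)) by apply Rmax_r. lra. }
  destruct (MVT_gen g x0 m (Derive g)) as [c [Hc1 Hc2]].
  - intros x Hx. rewrite Rmin_left in Hx by lra. apply HD. rewrite Rmax_right in Hx by lra. lra.
  - intros x Hx. rewrite Rmin_left, Rmax_right in Hx by lra. apply Hc. lra.
  - rewrite Rmin_left, Rmax_right in Hc1 by lra.
    assert (Hgc : dl < g c). { assert (Rabs (g c - g m) < g m - dl) by (apply Hb; apply Rabs_def1; lra).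
      apply Rabs_def2 in H. lra. }
    assert (Derive g c < 0) by (apply HD; [lra| auto]).
    assert (Derive g c * (m - x0) < 0) by (apply Rmult_neg_pos; lra).
    assert (g x0 <= g m) by (apply Hm1; lra). lra.
Qed.

Lemma D_val (f : R -> R) (x l l' : R) : is_derive f x l -> l = l' -> is_derive f x l'.
Proof. intros H E; subst; auto. Qed.

Lemma D_plus (f g : R -> R) x a b : is_derive f x a -> is_derive g x b -> is_derive (fun t => f t + g t) x (a + b).
Proof. intros Ha Hb. exact (is_derive_plus f g x a b Ha Hb). Qed.

Lemma D_minus (f g : R -> R) x a b : is_derive f x a -> is_derive g x b -> is_derive (fun t => f t - g t) x (a - b).
Proof. intros Ha Hb. exact (is_derive_minus f g x a b Ha Hb). Qed.

Lemma D_mult (f g : R -> R) x a b : is_derive f x a -> is_derive g x b -> is_derive (fun t => f t * g t) x (a * g x + f x * b).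
Proof. intros Ha Hb. exact (is_derive_mult f g x a b Ha Hb Rmult_comm). Qed.

Lemma D_scal (f : R -> R) c x a : is_derive f x a -> is_derive (fun t => c * f t) x (c * a).
Proof. intros Ha. exact (is_derive_scal f x c a Ha). Qed.

Lemma D_const (c x : R) : is_derive (fun _ => c) x 0.
Proof. exact (is_derive_const c x). Qed.

Lemma D_lin (c x : R) : is_derive (fun t => t * c) x c.
Proof. assert (H : is_derive (fun t => c * t) x (c * 1)) by (apply (D_scal (fun t => t) c x 1); apply (is_derive_id x)).
  eapply D_val. apply (is_derive_ext (fun t => c * t) (fun t => t * c) x (c * 1)). intros t; apply Rmult_comm. exact H. apply Rmult_1_r. Qed.

Lemma D_exp (f : R -> R) x a : is_derive f x a -> is_derive (fun t => exp (f t)) x (exp (f x) * a).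
Proof. intros Ha. eapply D_val. apply (is_derive_comp exp f x (exp (f x)) a). apply is_derive_exp. auto.
  simpl. unfold scal; simpl; unfold mult; simpl. ring. Qed.

Lemma D_complin (f : R -> R) L x a : is_derive f (x * L) a -> is_derive (fun t => f (t * L)) x (a * L).
Proof. intros Ha. eapply D_val. apply (is_derive_comp f (fun t => t * L) x a L). auto. apply D_lin.
  unfold scal; simpl; unfold mult; simpl. ring. Qed.

Lemma cont_from_eps (f : R -> R) x : (forall e, 0 < e -> exists eta, 0 < eta /\ forall t, Rabs (t - x) < eta -> Rabs (f t - f x) < e) -> continuity_pt f x.
Proof. intros H e He. destruct (H e He) as [eta [He1 He2]]. exists eta. split; auto.
  intros t [_ Ht]. simpl in *. unfold R_dist in *. auto. Qed.

Lemma cont_right (f : R -> R) x : continuity_pt f x -> filterlim f (at_right x) (locally (f x)).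
Proof. intros H. apply continuity_pt_filterlim in H. eapply filterlim_filter_le_1; [|exact H].
  apply filter_le_within. Qed.

Lemma locally_pos (P : R -> Prop) t : 0 < t -> (forall u, 0 < u -> P u) -> locally t P.
Proof. intros Ht H. exists (mkposreal t Ht). intros u Hu. apply H.
  unfold ball in Hu; simpl in Hu; unfold AbsRing_ball, abs, minus, plus, opp in Hu; simpl in Hu.
  apply Rabs_def2 in Hu. lra. Qed.

Lemma locally_neg (P : R -> Prop) t : t < 0 -> (forall u, u < 0 -> P u) -> locally t P.
Proof. intros Ht H. assert (Ht' : 0 < - t) by lra. exists (mkposreal (-t) Ht'). intros u Hu. apply H.
  unfold ball in Hu; simpl in Hu; unfold AbsRing_ball, abs, minus, plus, opp in Hu; simpl in Hu.
  apply Rabs_def2 in Hu. lra. Qed.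

Lemma derive_cont' (g : R -> R) x l : is_derive g x l -> continuity_pt g x.
Proof. intros H. apply continuity_pt_filterlim. apply (@ex_derive_continuous R_AbsRing R_NormedModule g x). exists l; auto. Qed.

Lemma cont_sumr d (F : R -> nat -> R) x : (forall i, (i < d)%nat -> continuity_pt (fun t => F t i) x) ->
  continuity_pt (fun t => sumr d (F t)) x.
Proof. induction d; simpl; intros H.
  - apply continuity_pt_const. intros a b; auto.
  - apply (continuity_pt_plus (fun t => sumr d (F t)) (fun t => F t d)). apply IHd; intros; apply H; lia. apply H; lia.
Qed.

Lemma cont_mult (f g : R -> R) x : continuity_pt f x -> continuity_pt g x -> continuity_pt (fun t => f t * g t) x.
Proof. intros. apply (continuity_pt_mult f g x); auto. Qed.
Lemma cont_minus (f g : R -> R) x : continuity_pt f x -> continuity_pt g x -> continuity_pt (fun t => f t - g t) x.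
Proof. intros. apply (continuity_pt_minus f g x); auto. Qed.
Lemma cont_const (c x : R) : continuity_pt (fun _ => c) x.
Proof. apply continuity_pt_const. intros a b; auto. Qed.

Section ODE.
Variables (d : nat) (M : nat -> nat -> R) (r th0 : nat -> R) (th : R -> nat -> R) (L : R).
Hypothesis HL : 0 < L.
Hypothesis Hsol : solves_ODE d M r th0 th.

Definition thet (t : R) (i : nat) := th (Rmax 0 t) i.

Lemma thet_eq t i : 0 <= t -> thet t i = th t i.
Proof. intros; unfold thet; rewrite Rmax_right; auto. Qed.

Lemma th_derive t i : 0 < t -> (i < d)%nat ->
  is_derive (fun u => th u i) t (th t i * (r i - sumr d (fun j => M i j * th t j))).
Proof. intros; destruct Hsol as [_ [_ H3]]; auto. Qed.

Lemma thet_cont i : (i < d)%nat -> forall t, continuity_pt (fun u => thet u i) t.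
Proof. intros Hi t. destruct (Rtotal_order t 0) as [Ht|[Ht|Ht]].
  - apply (continuity_pt_ext_loc (fun _ => th 0 i)). apply locally_neg; auto.
    intros u Hu. unfold thet. rewrite Rmax_left; lra. apply cont_const.
  - subst. apply cont_from_eps. intros e He. destruct Hsol as [H1 [H2 _]].
    destruct (right_lim_eps (fun u => th u i) 0 (th 0 i) (H2 i Hi) e He) as [eta [He1 He2]].
    exists eta. split; auto. intros t Ht. unfold thet. rewrite (Rmax_left 0 0) by lra.
    destruct (Rle_lt_dec t 0). rewrite Rmax_left by lra. rewrite Rminus_eq_0, Rabs_R0; auto.
    rewrite Rmax_right by lra. apply He2. apply Rabs_def2 in Ht. lra.
  - apply (continuity_pt_ext_loc (fun u => th u i)). apply locally_pos; auto.
    intros u Hu. unfold thet. rewrite Rmax_right; lra.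
    eapply derive_cont'. apply th_derive; auto.
Qed.

Lemma thetL_cont j : (j < d)%nat -> forall u, continuity_pt (fun u => thet (u * L) j) u.
Proof. intros Hj u. apply (continuity_pt_comp (fun u => u * L) (fun t => thet t j)).
  eapply derive_cont'. apply D_lin. apply thet_cont; auto. Qed.

Definition Zf (j : nat) (s : R) := RInt (fun u => thet (u * L) j) 0 s.

Lemma Zf_derive j s : (j < d)%nat -> is_derive (Zf j) s (thet (s * L) j).
Proof. intros Hj. apply (is_derive_RInt (fun u => thet (u * L) j) (Zf j) 0 s).
  - exists (mkposreal 1 Rlt_0_1). intros b _. unfold Zf. apply (RInt_correct (V := R_CompleteNormedModule)).
    apply ex_RInt_continuous. intros z _. apply continuity_pt_filterlim. apply thetL_cont; auto.
  - apply continuity_pt_filterlim. apply thetL_cont; auto.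
Qed.

Lemma Zf_0 j : Zf j 0 = 0.
Proof. unfold Zf. rewrite RInt_point. auto. Qed.

Definition Af (i : nat) (s : R) := s * r i - sumr d (fun j => M i j * Zf j s).

Lemma Af_derive i s : is_derive (Af i) s (r i - sumr d (fun j => M i j * thet (s * L) j)).
Proof. unfold Af. apply D_minus. apply D_lin.
  apply (is_derive_sumr d (fun s j => M i j * Zf j s)). intros j Hj. apply D_scal. apply Zf_derive; auto.
Qed.

Lemma Af_0 i : Af i 0 = 0.
Proof. unfold Af. rewrite (sumr_ext d _ (fun _ => 0)). rewrite sumr_zero. ring. intros. rewrite Zf_0. ring. Qed.

Lemma Af_cont i s : continuity_pt (Af i) s.
Proof. eapply derive_cont'. apply Af_derive. Qed.

Lemma th_formula i : (i < d)%nat -> forall s, 0 <= s -> th (s * L) i * exp (- L * Af i s) = th0 i.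
Proof. intros Hi.
  set (P := fun s => thet (s * L) i * exp (- L * Af i s)).
  assert (HP0 : P 0 = th0 i).
  { unfold P. rewrite Af_0, Rmult_0_l, thet_eq by lra. destruct Hsol as [H1 _]. rewrite H1; auto.
    rewrite Rmult_0_r, exp_0. ring. }
  intros s Hs. assert (E : P s = P 0).
  { apply const0.
    - apply cont_right. apply cont_mult. apply thetL_cont; auto.
      apply (continuity_pt_comp (fun s => - L * Af i s) exp). eapply derive_cont'. apply D_scal. apply Af_derive.
      eapply derive_cont'. apply is_derive_exp.
    - intros x Hx. unfold P. eapply D_val. apply D_mult.
      + apply (is_derive_ext_loc (fun u => th (u * L) i)). apply locally_pos; auto.
        intros u Hu. rewrite thet_eq; auto. nra.
        apply (D_complin (fun u => th u i)). apply th_derive; auto. nra.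
      + apply D_exp. apply D_scal. apply Af_derive.
      + cbv beta. rewrite !thet_eq by nra.
        rewrite (sumr_ext d (fun j => M i j * thet (x * L) j) (fun j => M i j * th (x * L) j)).
        ring. intros. rewrite thet_eq; auto. nra.
    - exact Hs. }
  unfold P in E. rewrite thet_eq in E by nra. rewrite E. auto.
Qed.


Lemma th_pos (Hth0 : forall i, (i < d)%nat -> 0 < th0 i) i : (i < d)%nat -> forall s, 0 <= s -> 0 < th (s * L) i.
Proof. intros Hi s Hs. assert (H := th_formula i Hi s Hs).
  assert (H2 : th (s * L) i = th0 i * exp (L * Af i s)).
  { rewrite <- H. rewrite Rmult_assoc, <- exp_plus. replace (- L * Af i s + L * Af i s) with 0 by ring. rewrite exp_0; ring. }
  rewrite H2. apply Rmult_lt_0_compat. auto. apply exp_pos. Qed.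

Definition Tf (s : R) (i : nat) := thet (s * L) i.

Definition En (s : R) := / 2 * sumr d (fun i => sumr d (fun j => M i j * (Tf s i * Tf s j))) - sumr d (fun i => r i * Tf s i).

Lemma Tf_derive i s : (i < d)%nat -> 0 < s ->
  is_derive (fun s => Tf s i) s (th (s * L) i * (r i - sumr d (fun j => M i j * th (s * L) j)) * L).
Proof. intros Hi Hs. unfold Tf.
  apply (is_derive_ext_loc (fun u => th (u * L) i)). apply locally_pos; auto.
  intros u Hu. rewrite thet_eq; auto. nra.
  apply (D_complin (fun u => th u i)). apply th_derive; auto. nra. Qed.

Lemma En_mono (Hsym : forall i j, M i j = M j i) (Hth0 : forall i, (i < d)%nat -> 0 < th0 i) :
  forall s, 0 <= s -> En s <= En 0.
Proof. apply mono0.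
  - apply cont_right. unfold En. apply cont_minus.
    + apply (continuity_pt_scal (fun s => sumr d (fun i => sumr d (fun j => M i j * (Tf s i * Tf s j))))).
      apply cont_sumr; intros i Hi. apply cont_sumr; intros j Hj. apply cont_mult. apply cont_const.
      apply cont_mult; apply thetL_cont; auto.
    + apply cont_sumr; intros i Hi. apply cont_mult. apply cont_const. apply thetL_cont; auto.
  - intros s Hs. set (T := fun i => th (s * L) i).
    set (g := fun i => r i - sumr d (fun j => M i j * T j)).
    set (D := fun i => T i * g i * L).
    assert (HT : forall i, Tf s i = T i). { intros. unfold Tf, T. rewrite thet_eq; auto. nra. }
    exists (/ 2 * sumr d (fun i => sumr d (fun j => M i j * (D i * Tf s j + Tf s i * D j))) - sumr d (fun i => r i * D i)).
    split.
    + unfold En. apply D_minus.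
      * apply D_scal. apply (is_derive_sumr d (fun s i => sumr d (fun j => M i j * (Tf s i * Tf s j)))).
        intros i Hi. apply (is_derive_sumr d (fun s j => M i j * (Tf s i * Tf s j))). intros j Hj.
        apply D_scal. eapply D_val. apply D_mult; apply Tf_derive; auto. rewrite !HT. unfold D, g, T. ring.
      * apply (is_derive_sumr d (fun s i => r i * Tf s i)). intros i Hi. apply D_scal. apply Tf_derive; auto.
    + assert (E1 : sumr d (fun i => sumr d (fun j => M i j * (D i * Tf s j + Tf s i * D j))) =
                   2 * sumr d (fun i => D i * sumr d (fun j => M i j * T j))).
      { transitivity (sumr d (fun i => D i * sumr d (fun j => M i j * T j)) + sumr d (fun i => sumr d (fun j => T i * M i j * D j))).
        - rewrite <- sumr_plus. apply sumr_ext; intros i Hi. rewrite <- sumr_scal, <- sumr_plus. apply sumr_ext; intros j Hj.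
          rewrite !HT. ring.
        - rewrite (sumr_swap d d (fun i j => T i * M i j * D j)).
          assert (E2 : sumr d (fun j => sumr d (fun i => T i * M i j * D j)) = sumr d (fun i => D i * sumr d (fun j => M i j * T j))).
          { apply sumr_ext; intros j Hj. rewrite <- sumr_scal. apply sumr_ext; intros i Hi. rewrite (Hsym i j). ring. }
          rewrite E2. ring. }
      rewrite E1.
      replace (/ 2 * (2 * sumr d (fun i => D i * sumr d (fun j => M i j * T j))) - sumr d (fun i => r i * D i))
        with (sumr d (fun i => D i * sumr d (fun j => M i j * T j)) - sumr d (fun i => r i * D i)) by field.
      rewrite <- sumr_minus. rewrite <- (sumr_zero d). apply sumr_le; intros i Hi.
      assert (0 < T i) by (apply th_pos; auto; lra). unfold D. fold (g i).
      replace (T i * g i * L * sumr d (fun j => M i j * T j) - r i * (T i * g i * L)) with (- (L * (T i * (g i * g i)))) by (unfold g; ring).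
      assert (0 <= g i * g i) by nra. assert (0 <= T i * (g i * g i)) by nra. nra.
Qed.

End ODE.

Lemma sumr_const d K : sumr d (fun _ => K) = INR d * K.
Proof. induction d; simpl sumr. simpl; ring. rewrite IHd, S_INR. ring. Qed.

Lemma sumr_le_const d f K : (forall i, (i < d)%nat -> f i <= K) -> sumr d f <= INR d * K.
Proof. intros H. rewrite <- sumr_const. apply sumr_le; auto. Qed.

Lemma sumr_term_le d f i : (i < d)%nat -> (forall j, (j < d)%nat -> j <> i -> f j <= 0) -> sumr d f <= f i.
Proof. induction d; simpl; intros Hi H; [lia|].
  destruct (Nat.eq_dec i d).
  - subst. assert (sumr d f <= 0). { rewrite <- (sumr_zero d). apply sumr_le. intros j Hj. apply H; lia. } lra.
  - assert (sumr d f <= f i) by (apply IHd; [lia| intros; apply H; lia]). assert (f d <= 0) by (apply H; lia). lra.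
Qed.

Lemma stab d M c (Hc : forall v, c * (sumr d (fun i => Rabs (v i)))^2 <= Qf d M v)
  (zz ww zs ws a : nat -> R) (beta gam Zb Dm al : R) :
  0 <= beta ->
  (forall i, (i < d)%nat -> ww i - a i - ws i = sumr d (fun j => M i j * (zz j - zs j))) ->
  (forall i, (i < d)%nat -> 0 <= zz i) ->
  (forall i, (i < d)%nat -> 0 <= ws i) ->
  (forall i, (i < d)%nat -> 0 <= zs i <= Zb) ->
  sumr d (fun i => ws i * zs i) = 0 ->
  (forall i, (i < d)%nat -> - beta <= ww i) ->
  (forall i, (i < d)%nat -> zz i * ww i <= gam) ->
  (forall i, (i < d)%nat -> Rabs (a i) <= al) ->
  (forall i, (i < d)%nat -> Rabs (zz i - zs i) <= Dm) ->
  c * (sumr d (fun i => Rabs (zz i - zs i)))^2 <= INR d * (gam + Zb * beta + Dm * al).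
Proof. intros Hb Hrel Hzz Hws Hzs Hcomp Hww Hg Ha HD.
  eapply Rle_trans. apply (Hc (fun i => zz i - zs i)). unfold Qf.
  rewrite (sumr_ext d _ (fun i => ((zz i - zs i) * (ww i - a i - ws i) - ws i * zs i) + ws i * zs i)).
  2:{ intros i Hi. rewrite Hrel; auto. ring. }
  rewrite sumr_plus, Hcomp, Rplus_0_r.
  apply sumr_le_const. intros i Hi.
  assert (H1 := Hzz i Hi). assert (H2 := Hws i Hi). assert (H3 := Hzs i Hi). assert (H4 := Hww i Hi).
  assert (H5 := Hg i Hi). assert (H6 := Ha i Hi). assert (H7 := HD i Hi).
  assert (H8 : - ((zz i - zs i) * a i) <= Dm * al).
  { eapply Rle_trans. apply Rle_abs. rewrite Rabs_Ropp, Rabs_mult. apply Rmult_le_compat; auto using Rabs_pos. }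
  assert (H9 : zs i * (- ww i) <= Zb * beta) by nra.
  assert (H10 : 0 <= zz i * ws i) by nra.
  replace ((zz i - zs i) * (ww i - a i - ws i) - ws i * zs i) with
    (zz i * ww i - zz i * ws i + zs i * (- ww i) - ((zz i - zs i) * a i)) by ring.
  lra.
Qed.

Section Eps.
Variables (n d : nat) (X : nat -> nat -> R) (y : nat -> R) (C k : nat -> R) (th : R -> nat -> R) (eps : R).
Hypothesis HA1 : forall i, (i < d)%nat -> 0 < corr_r n X y i.
Hypothesis HA2 : forall i j, (i < d)%nat -> (j < d)%nat -> i <> j -> gramM n X i j <= 0.
Hypothesis HC : forall i, (i < d)%nat -> 0 < C i.
Hypothesis Hk : forall i, (i < d)%nat -> 0 < k i.
Hypothesis Heps : 0 < eps < 1.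
Hypothesis Hth : solves_ODE d (gramM n X) (corr_r n X y) (fun i => C i * Rpower eps (k i)) th.
Variables (c Rm : R).
Hypothesis Hc0 : 0 < c.
Hypothesis Hc : forall v, c * (sumr d (fun i => Rabs (v i)))^2 <= Qf d (gramM n X) v.
Hypothesis HRm : forall i, (i < d)%nat -> corr_r n X y i <= Rm.
Hypothesis HRm0 : 0 <= Rm.

Let Mg := gramM n X.
Let rr := corr_r n X y.
Let th0 := fun i => C i * Rpower eps (k i).
Definition Lg := ln (/ eps).

Lemma Lg_pos : 0 < Lg.
Proof. unfold Lg. rewrite ln_Rinv by lra. assert (ln eps < 0). { rewrite <- ln_1. apply ln_increasing; lra. } lra. Qed.

Lemma ln_eps : ln eps = - Lg.
Proof. unfold Lg. rewrite ln_Rinv by lra. ring. Qed.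

Lemma th0_pos i : (i < d)%nat -> 0 < th0 i.
Proof. intros Hi. unfold th0, Rpower. apply Rmult_lt_0_compat. auto. apply exp_pos. Qed.

Lemma th0_le i : (i < d)%nat -> th0 i <= C i.
Proof. intros Hi. unfold th0, Rpower. rewrite ln_eps. assert (HL := Lg_pos). assert (Hki := Hk i Hi).
  assert (exp (k i * - Lg) < 1). { rewrite <- exp_0. apply exp_increasing. nra. }
  assert (0 < C i) by auto. nra. Qed.

Lemma th0_exp i : (i < d)%nat -> th0 i = exp (ln (C i) - k i * Lg).
Proof. intros Hi. unfold th0, Rpower. rewrite ln_eps.
  replace (ln (C i) - k i * Lg) with (ln (C i) + k i * - Lg) by ring. rewrite exp_plus, exp_ln by auto. auto. Qed.

Definition Wf (i : nat) (s : R) : R := k i - ln (C i) / Lg - Af d Mg rr th Lg i s.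
Definition ZZ (j : nat) (s : R) : R := Zf th Lg j s.

Lemma Wf_formula i s : Wf i s = k i - ln (C i) / Lg - s * rr i + sumr d (fun j => Mg i j * ZZ j s).
Proof. unfold Wf, Af, ZZ. ring. Qed.

Lemma th_exp i s : (i < d)%nat -> 0 <= s -> th (s * Lg) i = exp (- Lg * Wf i s).
Proof. intros Hi Hs. assert (HL := Lg_pos).
  assert (H := th_formula d Mg rr th0 th Lg HL Hth i Hi s Hs).
  assert (E : th (s * Lg) i = th0 i * exp (Lg * Af d Mg rr th Lg i s)).
  { rewrite <- H. rewrite Rmult_assoc, <- exp_plus. replace (- Lg * Af d Mg rr th Lg i s + Lg * Af d Mg rr th Lg i s) with 0 by ring. rewrite exp_0; ring. }
  rewrite E, th0_exp, <- exp_plus by auto. f_equal. unfold Wf. field. lra.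
Qed.

Lemma w_eq i s : (i < d)%nat -> 0 <= s -> w_eps th eps s i = Wf i s.
Proof. intros Hi Hs. unfold w_eps. fold Lg. rewrite th_exp, ln_exp, ln_eps by auto.
  assert (HL := Lg_pos). field. lra. Qed.

Lemma z_eq i s : (i < d)%nat -> 0 <= s -> z_eps th eps s i = ZZ i s.
Proof. intros Hi Hs. unfold z_eps, ZZ, Zf. fold Lg. apply RInt_ext. intros x Hx.
  rewrite Rmin_left, Rmax_right in Hx by lra. rewrite thet_eq; auto. assert (HL := Lg_pos). nra. Qed.

Definition F0 := / 2 * sumr d (fun i => sumr d (fun j => Rabs (Mg i j) * (C i * C j))).
Definition Bd := 1 + (2 * F0 + 2 * Rm) / c.

Lemma F0_pos : 0 <= F0.
Proof. unfold F0. apply Rmult_le_pos. lra. apply sumr_ge0; intros i Hi; apply sumr_ge0; intros j Hj.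
  assert (0 < C i) by auto. assert (0 < C j) by auto. assert (0 <= Rabs (Mg i j)) by apply Rabs_pos. apply Rmult_le_pos; [lra| apply Rmult_le_pos; lra]. Qed.

Lemma Bd_ge1 : 1 <= Bd.
Proof. unfold Bd. assert (H := F0_pos). assert (0 <= (2 * F0 + 2 * Rm) / c) by (apply Rdiv_le_0_compat; lra). lra. Qed.

Lemma th_bound i s : (i < d)%nat -> 0 <= s -> th (s * Lg) i <= Bd.
Proof. intros Hi Hs. assert (HL := Lg_pos).
  assert (Hsym : forall i j, Mg i j = Mg j i) by (intros; apply gram_sym).
  assert (Hpos : forall j, (j < d)%nat -> 0 < th0 j) by (intros; apply th0_pos; auto).
  assert (HE := En_mono d Mg rr th0 th Lg HL Hth Hsym Hpos s Hs).
  set (v := fun j => Tf th Lg s j).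
  assert (Hv : forall j, (j < d)%nat -> v j = th (s * Lg) j) by (intros; unfold v, Tf; apply thet_eq; nra).
  assert (Hvp : forall j, (j < d)%nat -> 0 < v j) by (intros j Hj; rewrite Hv; auto; apply (th_pos d Mg rr th0 th Lg HL Hth Hpos); auto).
  set (T := sumr d v).
  assert (HE0 : En d Mg rr th Lg 0 <= F0).
  { unfold En, F0. assert (H0 : forall j, (j < d)%nat -> Tf th Lg 0 j = th0 j).
    { intros j Hj. unfold Tf. rewrite Rmult_0_l, thet_eq by lra. destruct Hth as [H1 _]. apply H1; auto. }
    assert (0 <= sumr d (fun i => rr i * Tf th Lg 0 i)).
    { apply sumr_ge0; intros j Hj. rewrite H0; auto. apply Rmult_le_pos.
      apply Rlt_le, HA1; auto. apply Rlt_le, th0_pos; auto. }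
    assert (sumr d (fun i => sumr d (fun j => Mg i j * (Tf th Lg 0 i * Tf th Lg 0 j))) <= sumr d (fun i => sumr d (fun j => Rabs (Mg i j) * (C i * C j)))).
    { apply sumr_le; intros a Ha; apply sumr_le; intros b Hb. rewrite !H0; auto.
      assert (0 < th0 a) by (apply th0_pos; auto). assert (0 < th0 b) by (apply th0_pos; auto).
      assert (th0 a <= C a) by (apply th0_le; auto). assert (th0 b <= C b) by (apply th0_le; auto).
      assert (Mg a b <= Rabs (Mg a b)) by apply Rle_abs. assert (0 <= Rabs (Mg a b)) by apply Rabs_pos.
      assert (th0 a * th0 b <= C a * C b) by (apply Rmult_le_compat; lra).
      assert (Mg a b * (th0 a * th0 b) <= Rabs (Mg a b) * (th0 a * th0 b)) by (apply Rmult_le_compat_r; nra).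
      assert (Rabs (Mg a b) * (th0 a * th0 b) <= Rabs (Mg a b) * (C a * C b)) by (apply Rmult_le_compat_l; lra).
      lra. }
    lra. }
  assert (HQ : Qf d Mg v = 2 * (En d Mg rr th Lg s + sumr d (fun i => rr i * v i))).
  { unfold En, Qf, v. set (D2 := sumr d (fun i => sumr d (fun j => Mg i j * (Tf th Lg s i * Tf th Lg s j)))).
    set (D1 := sumr d (fun i => rr i * Tf th Lg s i)).
    replace (2 * (/ 2 * D2 - D1 + D1)) with D2 by field. unfold D2.
    apply sumr_ext; intros a Ha. rewrite <- sumr_scal. apply sumr_ext; intros; ring. }
  assert (HT : sumr d (fun i => Rabs (v i)) = T). { apply sumr_ext; intros; apply Rabs_right; apply Rle_ge, Rlt_le; auto. }
  assert (HrT : sumr d (fun i => rr i * v i) <= Rm * T).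
  { unfold T. rewrite <- sumr_scal. apply sumr_le; intros j Hj. assert (rr j <= Rm) by (apply HRm; auto). assert (0 < v j) by auto. nra. }
  assert (HcT := Hc v). change (gramM n X) with Mg in HcT. rewrite HT, HQ in HcT.
  assert (HT0 : 0 <= T) by (apply sumr_ge0; intros; apply Rlt_le; auto).
  assert (HTB : T <= Bd).
  { unfold Bd. assert (HF := F0_pos). destruct (Rle_lt_dec T 1). assert (0 <= (2 * F0 + 2 * Rm) / c) by (apply Rdiv_le_0_compat; lra). lra.
    assert (c * T <= 2 * F0 + 2 * Rm) by nra.
    assert (T <= (2 * F0 + 2 * Rm) / c). { apply (Rmult_le_reg_l c); auto. field_simplify; lra. } lra. }
  rewrite <- Hv by auto. assert (v i <= T) by (apply (sumr_term d v); auto; intros; apply Rlt_le; auto). lra.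
Qed.

Lemma W_lower i s : (i < d)%nat -> 0 <= s -> - ln Bd / Lg <= Wf i s.
Proof. intros Hi Hs. assert (HL := Lg_pos). assert (H := th_bound i s Hi Hs). rewrite th_exp in H by auto.
  apply ln_le in H; [|apply exp_pos]. rewrite ln_exp in H.
  apply (Rmult_le_reg_l Lg); auto. field_simplify; [|lra]. lra. Qed.

Lemma thetL_exRInt i a b : (i < d)%nat -> ex_RInt (fun u => thet th (u * Lg) i) a b.
Proof. intros Hi. apply (ex_RInt_continuous (V := R_CompleteNormedModule)). intros z _.
  apply continuity_pt_filterlim. apply (thetL_cont d Mg rr th0 th Lg Hth); auto. Qed.

Lemma ZZ_le_const i s K : (i < d)%nat -> 0 <= s -> (forall u, 0 < u < s -> thet th (u * Lg) i <= K) -> ZZ i s <= s * K.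
Proof. intros Hi Hs H. unfold ZZ, Zf.
  assert (E : RInt (fun _ => K) 0 s = s * K). { rewrite RInt_const. unfold scal; simpl; unfold mult; simpl. ring. }
  rewrite <- E. apply RInt_le; auto. apply thetL_exRInt; auto. apply (ex_RInt_const (V := R_NormedModule)). Qed.

Lemma ZZ_bounds i s : (i < d)%nat -> 0 <= s -> 0 <= ZZ i s <= s * Bd.
Proof. intros Hi Hs. assert (HL := Lg_pos). split.
  - unfold ZZ, Zf. assert (E : RInt (fun _ => 0) 0 s = 0). { rewrite RInt_const. unfold scal; simpl; unfold mult; simpl. ring. }
    apply Rle_trans with (RInt (fun _ => 0) 0 s). rewrite E; lra.
    apply RInt_le; auto. apply (ex_RInt_const (V := R_NormedModule)). apply thetL_exRInt; auto.
    intros u Hu. rewrite thet_eq by nra. apply Rlt_le. apply (th_pos d Mg rr th0 th Lg HL Hth); auto.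
    intros; apply th0_pos; auto. lra.
  - apply ZZ_le_const; auto. intros u Hu. rewrite thet_eq by nra. apply th_bound; auto; lra.
Qed.

Lemma Wf_derive i x : is_derive (Wf i) x (- (rr i - sumr d (fun j => Mg i j * thet th (x * Lg) j))).
Proof. unfold Wf. eapply D_val. apply D_minus. apply D_const. apply (Af_derive d Mg rr th0 th Lg Hth). ring. Qed.

Lemma stay i s dl : (i < d)%nat -> 0 <= s -> 0 < dl -> Mg i i * exp (- Lg * dl) < rr i ->
  dl < Wf i s -> ZZ i s <= s * exp (- Lg * dl).
Proof. intros Hi Hs Hdl Hdec Hw. assert (HL := Lg_pos).
  assert (Hpos : forall j, (j < d)%nat -> 0 < th0 j) by (intros; apply th0_pos; auto).
  assert (Hall : forall u, 0 <= u <= s -> dl < Wf i u).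
  { intros u Hu. destruct (Rlt_le_dec dl (Wf i u)) as [h|h]; auto. exfalso.
    assert (Wf i s <= dl); [|lra]. apply (stay_below (Wf i) u s dl); try lra.
    intros x Hx. eexists. split. apply Wf_derive. intros Hwx.
    assert (HS : sumr d (fun j => Mg i j * thet th (x * Lg) j) <= Mg i i * thet th (x * Lg) i).
    { apply (sumr_term_le d (fun j => Mg i j * thet th (x * Lg) j)); auto. intros j Hj Hji.
      rewrite thet_eq by nra. assert (0 < th (x * Lg) j) by (apply (th_pos d Mg rr th0 th Lg HL Hth); auto; lra).
      assert (Mg i j <= 0) by (apply HA2; auto). nra. }
    rewrite thet_eq in HS by nra. rewrite th_exp in HS by (auto; lra).
    assert (exp (- Lg * Wf i x) < exp (- Lg * dl)) by (apply exp_increasing; nra).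
    assert (0 <= Mg i i) by apply gram_diag. nra. }
  apply ZZ_le_const; auto. intros u Hu. rewrite thet_eq by nra. rewrite th_exp by (auto; lra).
  apply Rlt_le, exp_increasing. assert (dl < Wf i u) by (apply Hall; lra). nra.
Qed.

End Eps.

Lemma div_lt a b L : 0 < b -> a / b < L -> a < L * b.
Proof. intros Hb H. apply (Rmult_lt_compat_r b) in H; auto. unfold Rdiv in H.
  rewrite Rmult_assoc, Rinv_l, Rmult_1_r in H; lra. Qed.

Lemma lcp_bound d M r k s w z c Rm :
  0 < c -> (forall v, c * (sumr d (fun i => Rabs (v i)))^2 <= Qf d M v) ->
  (forall i, (i < d)%nat -> r i <= Rm) -> 0 <= Rm -> (forall i, (i < d)%nat -> 0 < k i) -> 0 <= s ->
  solves_LCP d M r k s w z -> forall i, (i < d)%nat -> z i <= s * Rm / c.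
Proof. intros Hc0 Hc HRm HRm0 Hk Hs [H1 H2] i Hi.
  set (T := sumr d z).
  assert (Hz : forall j, (j < d)%nat -> 0 <= z j) by (intros j Hj; apply (H1 j Hj)).
  assert (HT : sumr d (fun j => Rabs (z j)) = T) by (apply sumr_ext; intros; apply Rabs_right; apply Rle_ge; auto).
  assert (HQ : Qf d M z <= s * Rm * T).
  { unfold Qf. rewrite (sumr_ext d _ (fun j => z j * w j + ((-1) * (z j * k j) + s * (z j * r j)))).
    2:{ intros j Hj. destruct (H1 j Hj) as [E _]. rewrite E. ring. }
    rewrite sumr_plus, sumr_plus, !sumr_scal.
    rewrite (sumr_ext d (fun j => z j * w j) (fun j => w j * z j)) by (intros; ring). rewrite H2.
    assert (0 <= sumr d (fun j => z j * k j)) by (apply sumr_ge0; intros j Hj; assert (0 < k j) by auto; assert (0 <= z j) by auto; nra).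
    assert (sumr d (fun j => z j * r j) <= Rm * T). { unfold T. rewrite <- sumr_scal. apply sumr_le; intros j Hj.
      assert (r j <= Rm) by auto. assert (0 <= z j) by auto. nra. }
    nra. }
  assert (Hq := Hc z). rewrite HT in Hq.
  assert (HT0 : 0 <= T) by (apply sumr_ge0; auto).
  assert (HzT : z i <= T) by (apply (sumr_term d z); auto).
  assert (HcT : c * T <= s * Rm).
  { destruct (Req_dec T 0) as [E|E]. rewrite E. assert (0 <= s * Rm) by (apply Rmult_le_pos; auto). lra.
    assert (0 < T) by lra. apply (Rmult_le_reg_r T); auto. nra. }
  assert (T <= s * Rm / c). { apply (Rmult_le_reg_l c); auto. field_simplify; lra. }
  lra.
Qed.

Lemma Mmax d (M : nat -> nat -> R) : exists Mm, 0 <= Mm /\ forall i j, (i < d)%nat -> (j < d)%nat -> Rabs (M i j) <= Mm.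
Proof. exists (sumr d (fun i => sumr d (fun j => Rabs (M i j)))). split.
  apply sumr_ge0; intros; apply sumr_ge0; intros; apply Rabs_pos.
  intros i j Hi Hj. eapply Rle_trans. apply (sumr_term d (fun j => Rabs (M i j))); auto. intros; apply Rabs_pos.
  apply (sumr_term d (fun i => sumr d (fun j => Rabs (M i j)))); auto. intros; apply sumr_ge0; intros; apply Rabs_pos. Qed.

Theorem proposition4 (n d : nat) (X : nat -> nat -> R) (y : nat -> R)
  (HA1 : forall i, (i < d)%nat -> 0 < corr_r n X y i)
  (HA2 : forall i j, (i < d)%nat -> (j < d)%nat -> i <> j -> gramM n X i j <= 0)
  (C k : nat -> R)
  (HC : forall i, (i < d)%nat -> 0 < C i)
  (Hk : forall i, (i < d)%nat -> 0 < k i)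
  (theta : R -> R -> nat -> R)
  (Htheta : forall eps, 0 < eps < 1 ->
     solves_ODE d (gramM n X) (corr_r n X y)
       (fun i => C i * Rpower eps (k i)) (theta eps))
  (w z : R -> nat -> R)
  (Hwz : forall s, 0 <= s -> solves_LCP d (gramM n X) (corr_r n X y) k s (w s) (z s)) :
  forall S, 0 <= S -> forall eta, 0 < eta ->
  exists delta, 0 < delta /\
    forall eps, 0 < eps < delta -> eps < 1 ->
    forall s, 0 <= s <= S -> forall i, (i < d)%nat ->
      Rabs (w_eps (theta eps) eps s i - w s i) < eta /\
      Rabs (z_eps (theta eps) eps s i - z s i) < eta.
Proof.
  intros S HS eta Heta.
  destruct d as [|d'] eqn:Ed. { exists 1. split. lra. intros. lia. }
  rewrite <- Ed in *. assert (Hd : (0 < d)%nat) by lia. clear d' Ed.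
  destruct (quad_lower n d X y Hd HA1 HA2) as [c [Hc0 Hc]].
  destruct (sumr_min d _ HA1) as [rmin [Hrmin Hrmin2]].
  destruct (sumr_max d (corr_r n X y)) as [Rm [HRm0 HRm']].
  assert (HRm : forall i, (i < d)%nat -> corr_r n X y i <= Rm).
  { intros i Hi. eapply Rle_trans. apply Rle_abs. auto. }
  destruct (sumr_max d k) as [Km [HKm0 HKm]].
  destruct (sumr_max d (fun i => ln (C i))) as [Cm [HCm0 HCm]].
  destruct (Mmax d (gramM n X)) as [Mm [HMm0 HMm]].
  set (B := Bd n d X C c Rm).
  assert (HB1 : 1 <= B) by (apply Bd_ge1; auto).
  assert (HlnB : 0 <= ln B). { rewrite <- ln_1. destruct (Req_dec B 1) as [E|E]. rewrite E; lra. apply Rlt_le, ln_increasing; lra. }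
  set (Zb := S * Rm / c).
  assert (HZb : 0 <= Zb) by (unfold Zb; apply Rdiv_le_0_compat; [apply Rmult_le_pos|]; lra).
  set (dR := INR d).
  assert (HdR : 0 <= dR) by apply pos_INR.
  set (Wup := Km + Cm + S * Rm + dR * Mm * (S * B)).
  assert (HWup : 0 <= Wup). { unfold Wup. assert (0 <= dR * Mm * (S * B)) by (repeat apply Rmult_le_pos; lra). nra. }
  set (tau := eta / (2 * (1 + Mm))).
  assert (Htau : 0 < tau) by (unfold tau; apply Rdiv_lt_0_compat; lra).
  assert (Htau2 : tau * (2 * (1 + Mm)) = eta) by (unfold tau; field; lra).
  set (K0 := c * tau ^ 2).
  assert (HK0 : 0 < K0) by (unfold K0; apply Rmult_lt_0_compat; [lra| apply pow_lt; lra]).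
  set (dl := K0 / (4 * (1 + dR * S * B))).
  assert (HdSB : 0 <= dR * S * B) by (repeat apply Rmult_le_pos; lra).
  assert (Hdl : 0 < dl) by (unfold dl; apply Rdiv_lt_0_compat; lra).
  assert (Hdl2 : dl * (4 * (1 + dR * S * B)) = K0) by (unfold dl; field; lra).
  set (Dm := S * B + Zb).
  set (t1 := 2 * Cm / eta).
  set (t2 := Mm / (dl * rmin)).
  set (t3 := 4 * dR * S * Wup / (dl * K0)).
  set (t4 := 4 * dR * Zb * ln B / K0).
  set (t5 := 4 * dR * Dm * Cm / K0).
  assert (Ht1 : 0 <= t1) by (unfold t1; apply Rdiv_le_0_compat; lra).
  assert (Ht2 : 0 <= t2) by (unfold t2; apply Rdiv_le_0_compat; [lra| apply Rmult_lt_0_compat; lra]).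
  assert (Ht3 : 0 <= t3) by (unfold t3; apply Rdiv_le_0_compat; [|apply Rmult_lt_0_compat; lra]; apply Rmult_le_pos; [|exact HWup]; apply Rmult_le_pos; [|exact HS]; lra).
  assert (Ht4 : 0 <= t4) by (unfold t4; apply Rdiv_le_0_compat; [|lra]; apply Rmult_le_pos; [|exact HlnB]; apply Rmult_le_pos; [|exact HZb]; lra).
  assert (HDm : 0 <= Dm) by (unfold Dm; assert (0 <= S * B) by (apply Rmult_le_pos; lra); lra).
  assert (Ht5 : 0 <= t5) by (unfold t5; apply Rdiv_le_0_compat; [|lra]; apply Rmult_le_pos; [|exact HCm0]; apply Rmult_le_pos; [|exact HDm]; lra).
  set (G := 1 + t1 + t2 + t3 + t4 + t5).
  assert (HG : G = 1 + t1 + t2 + t3 + t4 + t5) by reflexivity.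
  exists (exp (- G)). split. apply exp_pos.
  intros eps [Heps0 HepsG] Heps1 s [Hs0 HsS] i Hi.
  assert (Heps : 0 < eps < 1) by lra.
  set (th := theta eps).
  assert (Hth := Htheta eps Heps). fold th in Hth.
  set (L := Lg eps).
  assert (HLG : G < L).
  { unfold L, Lg. rewrite ln_Rinv by lra. assert (ln eps < ln (exp (- G))) by (apply ln_increasing; lra).
    rewrite ln_exp in H. lra. }
  assert (HL1 : 1 < L) by lra.
  assert (C1 : 2 * Cm < L * eta) by (apply div_lt; [lra| fold t1; lra]).
  assert (C2 : Mm < L * (dl * rmin)) by (apply div_lt; [apply Rmult_lt_0_compat; lra| fold t2; lra]).
  assert (C3 : 4 * dR * S * Wup < L * (dl * K0)) by (apply div_lt; [apply Rmult_lt_0_compat; lra| fold t3; lra]).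
  assert (C4 : 4 * dR * Zb * ln B < L * K0) by (apply div_lt; [lra| fold t4; lra]).
  assert (C5 : 4 * dR * Dm * Cm < L * K0) by (apply div_lt; [lra| fold t5; lra]).
  set (rho := exp (- L * dl)).
  assert (Hrho : 0 < rho) by apply exp_pos.
  assert (Hrho2 : rho * (L * dl) < 1).
  { unfold rho. replace (- L * dl) with (- (L * dl)) by ring. rewrite exp_Ropp.
    assert (1 + L * dl < exp (L * dl)) by (apply exp_ineq1; nra).
    assert (0 < exp (L * dl)) by apply exp_pos.
    apply (Rmult_lt_reg_l (exp (L * dl))); auto. field_simplify; lra. }
  assert (Hdec : forall j, (j < d)%nat -> gramM n X j j * rho < corr_r n X y j).
  { intros j Hj. assert (gramM n X j j <= Mm) by (eapply Rle_trans; [apply Rle_abs| apply HMm; auto]).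
    assert (rmin <= corr_r n X y j) by auto.
    assert (Mm * rho <= L * dl * rmin * rho) by nra. nra. }
  assert (HLpos : 0 < L) by lra.
  set (zz := fun j => ZZ th eps j s).
  set (ww := fun j => Wf n d X y C k th eps j s).
  set (a := fun j => - ln (C j) / L).
  destruct (Hwz s Hs0) as [Hl1 Hl2].
  assert (Hzs : forall j, (j < d)%nat -> 0 <= z s j <= Zb).
  { intros j Hj. split. apply (Hl1 j Hj).
    assert (z s j <= s * Rm / c) by (apply (lcp_bound d (gramM n X) (corr_r n X y) k s (w s) (z s) c Rm); auto).
    assert (s * Rm / c <= Zb). { unfold Zb, Rdiv. apply Rmult_le_compat_r. apply Rlt_le, Rinv_0_lt_compat; auto. nra. }
    lra. }
  assert (Hzz : forall j, (j < d)%nat -> 0 <= zz j <= S * B).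
  { intros j Hj. destruct (ZZ_bounds n d X y C k th eps HA1 HC Hk Heps Hth c Rm Hc0 Hc HRm HRm0 j s Hj Hs0) as [h1 h2].
    fold B in h2. unfold zz. split; auto. nra. }
  assert (Hwwl : forall j, (j < d)%nat -> - (ln B / L) <= ww j).
  { intros j Hj. assert (h := W_lower n d X y C k th eps HA1 HC Hk Heps Hth c Rm Hc0 Hc HRm HRm0 j s Hj Hs0).
    fold B L in h. unfold ww. replace (- (ln B / L)) with (- ln B / L) by (field; lra). exact h. }
  assert (Hwwu : forall j, (j < d)%nat -> Rabs (ww j) <= Wup).
  { intros j Hj. unfold ww. rewrite Wf_formula. fold L.
    assert (h1 : Rabs (k j) <= Km) by auto.
    assert (h2 : Rabs (ln (C j) / L) <= Cm).
    { unfold Rdiv. rewrite Rabs_mult, Rabs_inv, (Rabs_right L) by lra. assert (Rabs (ln (C j)) <= Cm) by auto.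
      assert (0 < / L < 1) by (split; [apply Rinv_0_lt_compat; lra| rewrite <- Rinv_1; apply Rinv_lt_contravar; lra]).
      assert (0 <= Rabs (ln (C j))) by apply Rabs_pos. nra. }
    assert (h3 : Rabs (s * corr_r n X y j) <= S * Rm).
    { rewrite Rabs_mult, (Rabs_right s) by lra. assert (Rabs (corr_r n X y j) <= Rm) by auto.
      assert (0 <= Rabs (corr_r n X y j)) by apply Rabs_pos. nra. }
    assert (h4 : Rabs (sumr d (fun m => gramM n X j m * ZZ th eps m s)) <= dR * Mm * (S * B)).
    { eapply Rle_trans. apply sumr_abs. rewrite Rmult_assoc. apply sumr_le_const. intros m Hm.
      rewrite Rabs_mult. assert (Rabs (gramM n X j m) <= Mm) by auto. destruct (Hzz m Hm) as [z1 z2]. unfold zz in z1, z2.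
      rewrite (Rabs_right (ZZ th eps m s)) by lra. assert (0 <= Rabs (gramM n X j m)) by apply Rabs_pos. nra. }
    unfold Wup. eapply Rle_trans. apply Rabs_triang. unfold Rminus.
    eapply Rle_trans. apply Rplus_le_compat_r. eapply Rle_trans. apply Rabs_triang.
    apply Rplus_le_compat_r. eapply Rle_trans. apply Rabs_triang. rewrite !Rabs_Ropp. apply Rplus_le_compat; [exact h1|exact h2].
    rewrite Rabs_Ropp. lra. }
  set (gam := S * B * dl + S * rho * Wup).
  assert (Hgam : forall j, (j < d)%nat -> zz j * ww j <= gam).
  { intros j Hj. destruct (Hzz j Hj) as [z1 z2].
    assert (0 <= S * B * dl) by (apply Rmult_le_pos; [apply Rmult_le_pos|]; lra).
    assert (0 <= S * rho * Wup) by (apply Rmult_le_pos; [apply Rmult_le_pos|]; lra).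
    destruct (Rle_lt_dec (ww j) dl) as [h|h].
    - destruct (Rle_lt_dec (ww j) 0) as [h'|h']. unfold gam. nra.
      unfold gam. assert (zz j * ww j <= S * B * dl) by nra. lra.
    - assert (zz j <= s * rho) by (apply (stay n d X y C k th eps HA2 HC Heps Hth j s dl Hj Hs0 Hdl (Hdec j Hj) h)).
      assert (ww j <= Wup) by (eapply Rle_trans; [apply Rle_abs| auto]).
      assert (zz j <= S * rho) by nra. unfold gam. nra. }
  assert (Hrel : forall j, (j < d)%nat -> ww j - a j - w s j = sumr d (fun m => gramM n X j m * (zz m - z s m))).
  { intros j Hj. unfold ww, a. rewrite Wf_formula. fold L. destruct (Hl1 j Hj) as [E _]. rewrite E.
    rewrite (sumr_ext d (fun m => gramM n X j m * (zz m - z s m)) (fun m => gramM n X j m * zz m - gramM n X j m * z s m)) by (intros; ring).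
    rewrite sumr_minus. unfold zz. field. lra. }
  set (beta := ln B / L). set (al := Cm / L).
  assert (Hbeta : 0 <= beta) by (unfold beta; apply Rdiv_le_0_compat; lra).
  assert (Hal : forall j, (j < d)%nat -> Rabs (a j) <= al).
  { intros j Hj. unfold a, al, Rdiv. rewrite Rabs_mult, Rabs_Ropp, Rabs_inv, (Rabs_right L) by lra.
    apply Rmult_le_compat_r. apply Rlt_le, Rinv_0_lt_compat; lra. auto. }
  assert (HDj : forall j, (j < d)%nat -> Rabs (zz j - z s j) <= Dm).
  { intros j Hj. destruct (Hzz j Hj). destruct (Hzs j Hj). unfold Dm. apply Rabs_le. lra. }
  assert (Hst := stab d (gramM n X) c Hc zz ww (z s) (w s) a beta gam Zb Dm al Hbeta Hrel
    (fun j Hj => proj1 (Hzz j Hj)) (fun j Hj => proj1 (proj2 (Hl1 j Hj))) Hzs Hl2 Hwwl Hgam Hal HDj).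
  fold dR in Hst.
  assert (HR : dR * (gam + Zb * beta + Dm * al) < K0).
  { unfold gam, beta, al.
    assert (e1 : 4 * (dR * (S * B * dl)) < K0). { assert (4 * dl * (dR * S * B) = K0 - 4 * dl) by (rewrite <- Hdl2; ring). nra. }
    assert (e2 : 4 * (dR * (S * rho * Wup)) < K0).
    { assert (4 * dR * S * Wup * rho <= L * (dl * K0) * rho) by nra.
      assert (L * (dl * K0) * rho = K0 * (rho * (L * dl))) by ring. nra. }
    assert (e3 : 4 * (dR * (Zb * (ln B / L))) < K0).
    { replace (4 * (dR * (Zb * (ln B / L)))) with ((4 * dR * Zb * ln B) / L) by (field; lra).
      apply (Rmult_lt_reg_r L); auto. field_simplify; lra. }
    assert (e4 : 4 * (dR * (Dm * (Cm / L))) < K0).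
    { replace (4 * (dR * (Dm * (Cm / L)))) with ((4 * dR * Dm * Cm) / L) by (field; lra).
      apply (Rmult_lt_reg_r L); auto. field_simplify; lra. }
    nra. }
  set (SD := sumr d (fun j => Rabs (zz j - z s j))).
  assert (HSD0 : 0 <= SD) by (apply sumr_ge0; intros; apply Rabs_pos).
  assert (HSD : SD < tau).
  { assert (c * SD ^ 2 < c * tau ^ 2) by (fold SD in Hst; fold K0; lra).
    assert (SD ^ 2 < tau ^ 2) by (apply (Rmult_lt_reg_l c); auto).
    destruct (Rlt_le_dec SD tau); auto. assert (tau ^ 2 <= SD ^ 2) by (apply pow_incr; lra). lra. }
  assert (Htau_eta : tau <= eta / 2) by (assert (0 <= Mm * tau) by nra; nra).
  split.
  - rewrite (w_eq n d X y C k th eps HC Heps Hth i s Hi Hs0). fold (ww i).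
    replace (ww i - w s i) with (a i + (ww i - a i - w s i)) by ring. rewrite Hrel by auto.
    eapply Rle_lt_trans. apply Rabs_triang.
    assert (Rabs (sumr d (fun m => gramM n X i m * (zz m - z s m))) <= Mm * SD).
    { eapply Rle_trans. apply sumr_abs. unfold SD. rewrite <- sumr_scal. apply sumr_le. intros m Hm.
      rewrite Rabs_mult. apply Rmult_le_compat_r. apply Rabs_pos. auto. }
    assert (Rabs (a i) <= al) by auto.
    assert (al < eta / 2). { unfold al. apply (Rmult_lt_reg_r L); auto. field_simplify; lra. }
    assert (Mm * SD <= Mm * tau) by nra.
    assert (2 * Mm * tau < eta) by nra. lra.
  - rewrite (z_eq d th eps Heps i s Hi Hs0). fold (zz i).
    assert (Rabs (zz i - z s i) <= SD) by (apply (sumr_term d (fun j => Rabs (zz j - z s j))); auto; intros; apply Rabs_pos).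
    lra.
Qed.
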